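(* Let $\mathcal{K}$ be a continuous unitary representation of $\overline{\mathfrak{S}}_\infty$ in a Hilbert space $\mathcal{H}$, let $n\ge 0$ and $k\ge 1$ be integers, let $P_n$ be the weak-operator limit of $\mathcal{K}({}^n\sigma_m)$ as $m\to\infty$, and let $O_k$ be the weak-operator limit of $\mathcal{K}((k\;\;N))$ as $N\to\infty$. Then $P_nO_k=O_kP_n$.
   Context: $\overline{\mathfrak{S}}_\infty$ is the group of all bijections of $\mathbb{N}$, with the Polish topology in which the subgroups $\mathfrak{S}(n,\infty)=\{s: s(j)=j \text{ for } j=1,\dots,n\}$ form a fundamental system of neighborhoods of the identity; continuity of $\mathcal{K}$ means $\lim_{n\to\infty}\sup_{s\in\mathfrak{S}(n,\infty)}\|\mathcal{K}(s)\eta-\eta\|=0$ for each $\eta\in\mathcal{H}$. $(k\;j)$ denotes the transposition of $k$ and $j$, and ${}^n\sigma_m=(n+1\;\;n+m+1)(n+2\;\;n+m+2)\cdots(n+m\;\;n+2m)$. Both weak-operator limits $P_n$ and $O_k$ exist and are self-adjoint projections. *)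

(* Defs.v *)
From HB Require Import structures.
From mathcomp Require Import all_boot all_order all_algebra.
From mathcomp Require Import reals complex.
Set Implicit Arguments. Unset Strict Implicit. Unset Printing Implicit Defensive.
Import Order.TTheory GRing.Theory Num.Theory.
Local Open Scope ring_scope.

Record hilbert_space (R : realType) (H : lmodType R[i]) := HilbertSpace {
  ip : H -> H -> R[i];
  ipDl : forall (a : R[i]) (x y z : H), ip (a *: x + y) z = a * ip x z + ip y z;
  ip_conj : forall x y : H, ip y x = (ip x y)^*;
  ip_ge0 : forall x : H, 0 <= ip x x;
  ip_eq0 : forall x : H, ip x x = 0 -> x = 0;
  ip_complete : forall u : nat -> H,
    (forall e : R[i], 0 < e -> exists N : nat, forall m p : nat,
        (N <= m)%N -> (N <= p)%N -> sqrtC (ip (u m - u p) (u m - u p)) < e) ->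
    exists l : H, forall e : R[i], 0 < e -> exists N : nat, forall m : nat,
        (N <= m)%N -> sqrtC (ip (u m - l) (u m - l)) < e
}.

Definition hnorm (R : realType) (H : lmodType R[i]) (HS : hilbert_space H)
  (x : H) : R[i] := sqrtC (ip HS x x).

(* The set N = {1,2,3,...} is encoded as the positive elements of nat;
   a bijection of N is encoded as a bijection of nat fixing the dummy point 0. *)
Definition Sinf (s : nat -> nat) : Prop := bijective s /\ s 0%N = 0%N.

Definition in_S_n_inf (n : nat) (s : nat -> nat) : Prop :=
  Sinf s /\ forall j : nat, (1 <= j <= n)%N -> s j = j.

Definition transp (k j : nat) : nat -> nat :=
  fun x => if x == k then j else if x == j then k else x.

(* ^n sigma_m = (n+1 n+m+1)(n+2 n+m+2)...(n+m n+2m) *)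
Definition nsigma (n m : nat) : nat -> nat :=
  fun x => if (n < x <= n + m)%N then (x + m)%N
           else if (n + m < x <= n + m + m)%N then (x - m)%N else x.

Record unitary_rep (R : realType) (H : lmodType R[i]) (HS : hilbert_space H)
    (K : (nat -> nat) -> H -> H) : Prop := {
  rep_linear : forall s, Sinf s -> forall (a : R[i]) (x y : H),
      K s (a *: x + y) = a *: K s x + K s y;
  rep_isometry : forall s, Sinf s -> forall x y : H, ip HS (K s x) (K s y) = ip HS x y;
  rep_surj : forall s, Sinf s -> forall y : H, exists x : H, K s x = y;
  rep_id : forall x : H, K id x = x;
  rep_mul : forall s t, Sinf s -> Sinf t -> forall x : H, K (s \o t) x = K s (K t x);
  rep_cont : forall (eta : H) (e : R[i]), 0 < e -> exists n0 : nat,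
      forall n : nat, (n0 <= n)%N -> forall s, in_S_n_inf n s ->
        hnorm HS (K s eta - eta) < e
}.

Definition cvgC (R : realType) (c : nat -> R[i]) (l : R[i]) : Prop :=
  forall e : R[i], 0 < e -> exists N : nat, forall m : nat, (N <= m)%N -> `|c m - l| < e.

Definition weak_limit (R : realType) (H : lmodType R[i]) (HS : hilbert_space H)
    (T : nat -> H -> H) (P : H -> H) : Prop :=
  forall x y : H, cvgC (fun m => ip HS (T m x) y) (ip HS (P x) y).

(* Main.v *)
Require Import Defs.
From HB Require Import structures.
From mathcomp Require Import all_boot all_order all_algebra.
From mathcomp Require Import reals complex.
From Stdlib Require Import FunctionalExtensionality.
From mathcomp Require Import ring zify.
Import Order.TTheory GRing.Theory Num.Theory.
Local Open Scope ring_scope.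

Lemma ip0l (R : realType) (H : lmodType R[i]) (HS : hilbert_space H) z :
  ip HS 0 z = 0.
Proof.
have := ipDl HS 1 0 0 z; rewrite scale1r addr0 mul1r.
by move/(congr1 (fun t => t - ip HS 0 z)); rewrite addrK subrr.
Qed.

Lemma ipZl (R : realType) (H : lmodType R[i]) (HS : hilbert_space H) a x z :
  ip HS (a *: x) z = a * ip HS x z.
Proof. by have := ipDl HS a x 0 z; rewrite addr0 ip0l addr0. Qed.

Lemma ipDl1 (R : realType) (H : lmodType R[i]) (HS : hilbert_space H) x y z :
  ip HS (x + y) z = ip HS x z + ip HS y z.
Proof. by have := ipDl HS 1 x y z; rewrite scale1r mul1r. Qed.

Lemma ipBl (R : realType) (H : lmodType R[i]) (HS : hilbert_space H) x y z :
  ip HS (x - y) z = ip HS x z - ip HS y z.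
Proof. by rewrite ipDl1 -scaleN1r ipZl mulN1r. Qed.

Lemma ipDr (R : realType) (H : lmodType R[i]) (HS : hilbert_space H) x y z :
  ip HS x (y + z) = ip HS x y + ip HS x z.
Proof. by rewrite [LHS]ip_conj ipDl1 rmorphD [ip HS x y]ip_conj [ip HS x z]ip_conj. Qed.

Lemma ipZr (R : realType) (H : lmodType R[i]) (HS : hilbert_space H) a x y :
  ip HS x (a *: y) = a^* * ip HS x y.
Proof. by rewrite [LHS]ip_conj ipZl rmorphM [ip HS x y]ip_conj. Qed.

Lemma ipBr (R : realType) (H : lmodType R[i]) (HS : hilbert_space H) x y z :
  ip HS x (y - z) = ip HS x y - ip HS x z.
Proof. by rewrite ipDr -scaleN1r ipZr rmorphN rmorph1 mulN1r. Qed.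

Lemma ip_ext (R : realType) (H : lmodType R[i]) (HS : hilbert_space H) u v :
  (forall y, ip HS u y = ip HS v y) -> u = v.
Proof.
move=> e; apply/eqP; rewrite -subr_eq0; apply/eqP; apply: (@ip_eq0 _ _ HS).
by rewrite ipBl e subrr.
Qed.

Lemma cs_bound (R : realType) (H : lmodType R[i]) (HS : hilbert_space H) u y :
  `|ip HS u y| ^+ 2 <= ip HS u u * (ip HS y y + 1).
Proof.
set A := ip HS u u; set B := ip HS u y; set C := ip HS y y.
have A0 : 0 <= A := ip_ge0 HS u.
have C0 : 0 <= C := ip_ge0 HS y.
have C1 : 0 < C + 1 by rewrite ltr_wpDl.
pose t : R[i] := (C + 1)^-1.
have t0 : 0 < t by rewrite invr_gt0.
have tC : t * (C + 1) = 1 by rewrite mulVf // gt_eqF.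
have treal : t^* = t by apply: geC0_conj; exact: ltW.
pose b : R[i] := `|B| ^+ 2.
have b0 : 0 <= b by rewrite exprn_ge0.
have key := ip_ge0 HS (u + (- t * B) *: y).
rewrite ipDl1 !ipDr !ipZl !ipZr in key.
have Cr : C^* = C by apply: geC0_conj.
rewrite -/A -/B -/C in key.
have E : ip HS y u = B^* by rewrite ip_conj.
rewrite E in key.
have cM : forall a c : R[i], (a * c)^* = a^* * c^* by move=> a c; exact: rmorphM.
have cN : forall a : R[i], (- a)^* = - a^* by move=> a; exact: rmorphN.
rewrite cM cN treal in key.
have bE : b = B * B^* by rewrite /b normCK.
have e3 : t * b = t * t * b * C + t * t * b.
  by rewrite -{1}[t * b]mulr1 -tC; ring.
have h : 0 <= A - t * b - t * t * b.
  have -> : A - t * b - t * t * b = A + (- t * B^*) * B + (- t * B * B^* + (- t * B) * ((- t * B^*) * C)).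
    have e4 : t * t * b = t * b - t * t * b * C by rewrite e3; ring.
    by rewrite e4 bE; ring.
  by [].
have h2 : t * b <= A.
  have h3 : 0 <= t * t * b by rewrite !mulr_ge0 // ltW.
  rewrite -subr_ge0; apply: le_trans h3 _; rewrite -subr_ge0.
  exact: h.
have -> : `|B| ^+ 2 = t * b * (C + 1) by rewrite mulrAC tC mul1r.
by rewrite ler_pM2r.
Qed.

Lemma small_ip (R : realType) (H : lmodType R[i]) (HS : hilbert_space H) y (e : R[i]) :
  0 < e -> exists d : R[i], 0 < d /\ forall u y', ip HS y' y' = ip HS y y ->
    ip HS u u < d -> `|ip HS u y'| < e.
Proof.
move=> e0; have C1 : 0 < ip HS y y + 1 by rewrite ltr_wpDl // ip_ge0.
exists (e ^+ 2 / (ip HS y y + 1)); split.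
  by rewrite divr_gt0 // exprn_gt0.
move=> u y' hy hu.
have b := cs_bound _ _ HS u y'; rewrite hy in b.
have b2 : `|ip HS u y'| ^+ 2 < e ^+ 2.
  apply: le_lt_trans b _.
  by rewrite -ltr_pdivlMr.
rewrite -(sqrCK (normr_ge0 _)) -(sqrCK (ltW e0)).
by rewrite ltr_sqrtC // qualifE /= exprn_ge0 // ltW.
Qed.

Lemma cvgC_uniq (R : realType) (c d : nat -> R[i]) l1 l2 :
  cvgC c l1 -> cvgC d l2 -> (exists N, forall m, (N <= m)%N -> c m = d m) -> l1 = l2.
Proof.
move=> hc hd [N hN]; apply/eqP; rewrite -subr_eq0 -normr_eq0; apply/eqP.
apply/eqP; apply: contraT => ne.
have pos : 0 < `|l1 - l2| by rewrite lt_def ne normr_ge0.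
have e0 : 0 < `|l1 - l2| / 2 by rewrite divr_gt0.
have [N1 h1] := hc _ e0; have [N2 h2] := hd _ e0.
pose m := (N + N1 + N2)%N.
have := h1 m (leq_trans (leq_addl N N1) (leq_addr _ _)).
have := h2 m (leq_addl _ _).
rewrite -(hN m (leq_trans (leq_addr N1 N) (leq_addr _ _))) => a b.
have : `|l1 - l2| < `|l1 - l2| / 2 + `|l1 - l2| / 2.
  apply: le_lt_trans (ler_distD (c m) l1 l2) _.
  by rewrite distrC ltrD.
by rewrite -splitr ltxx.
Qed.

Lemma cvgC_conj (R : realType) (c : nat -> R[i]) l :
  cvgC c l -> cvgC (fun m => (c m)^*) l^*.
Proof.
move=> h e e0; have [N hN] := h e e0; exists N => m hm.
have cB : forall a b : R[i], (a - b)^* = a^* - b^* by move=> a b; exact: rmorphB.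
by rewrite -cB norm_conjC hN.
Qed.

Lemma cvgC_close (R : realType) (c d : nat -> R[i]) l :
  cvgC c l -> (forall e : R[i], 0 < e -> exists N, forall m, (N <= m)%N -> `|d m - c m| < e) ->
  cvgC d l.
Proof.
move=> hc hd e e0.
have e2 : 0 < e / 2 by rewrite divr_gt0.
have [N1 h1] := hc _ e2; have [N2 h2] := hd _ e2.
exists (N1 + N2)%N => m hm.
apply: le_lt_trans (ler_distD (c m) (d m) l) _.
rewrite (splitr e) ltrD //; first by apply: h2; apply: leq_trans hm; exact: leq_addl.
by apply: h1; apply: leq_trans hm; exact: leq_addr.
Qed.

Lemma cvgC_ev_const (R : realType) (c : nat -> R[i]) a :
  (exists N, forall m, (N <= m)%N -> c m = a) -> cvgC c a.
Proof.
move=> [N hN] e e0; exists N => m hm; by rewrite hN // subrr normr0.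
Qed.


Ltac natcase := repeat (case: ifP => /=); move=> *; lia.

Lemma nsigma_invol n m x : nsigma n m (nsigma n m x) = x.
Proof. rewrite /nsigma; natcase. Qed.

Lemma nsigma0 n m : nsigma n m 0 = 0%N.
Proof. by rewrite /nsigma !ltn0. Qed.

Lemma transp_invol k N x : transp k N (transp k N x) = x.
Proof. rewrite /transp; natcase. Qed.

Lemma transp0 k N : (1 <= k)%N -> (1 <= N)%N -> transp k N 0 = 0%N.
Proof. rewrite /transp; natcase. Qed.

Lemma transp_fix k N m j : (m < k)%N -> (m < N)%N -> (1 <= j <= m)%N -> transp k N j = j.
Proof. rewrite /transp; natcase. Qed.

Lemma comm_small n m k N x : (1 <= k <= n)%N -> (n + m + m < N)%N ->
  nsigma n m (transp k N x) = transp k N (nsigma n m x).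
Proof. rewrite /transp /nsigma; natcase. Qed.

Lemma comm_big n m k N x : (n < k <= n + m)%N -> (n < N <= n + m)%N ->
  transp k N (nsigma n m x) = nsigma n m (transp (k + m) (N + m) x).
Proof. rewrite /transp /nsigma; natcase. Qed.

Lemma Sinf_invol s : (forall x, s (s x) = x) -> s 0%N = 0%N -> Sinf s.
Proof. move=> h0 h1; split => //; by exists s. Qed.

Lemma K_selfadj (R : realType) (H : lmodType R[i]) (HS : hilbert_space H)
  (K : (nat -> nat) -> H -> H) (hK : unitary_rep HS K) s :
  Sinf s -> (forall x, s (s x) = x) -> forall a b, ip HS (K s a) b = ip HS a (K s b).
Proof.
move=> hs hinv a b.
rewrite -(rep_isometry hK hs a (K s b)) -(rep_mul hK hs hs).
have -> : s \o s = id by apply: functional_extensionality => x; exact: hinv.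
by rewrite (rep_id hK).
Qed.

Lemma K_sub (R : realType) (H : lmodType R[i]) (HS : hilbert_space H)
  (K : (nat -> nat) -> H -> H) (hK : unitary_rep HS K) s :
  Sinf s -> forall a b, K s (a - b) = K s a - K s b.
Proof.
move=> hs a b.
have := rep_linear hK hs (-1) b a.
by rewrite !scaleN1r addrC [X in _ = X -> _]addrC => <-.
Qed.

Lemma weak_selfadj (R : realType) (H : lmodType R[i]) (HS : hilbert_space H)
  (T : nat -> H -> H) (P : H -> H) :
  weak_limit HS T P ->
  (exists N, forall m, (N <= m)%N -> forall a b, ip HS (T m a) b = ip HS a (T m b)) ->
  forall a b, ip HS (P a) b = ip HS a (P b).
Proof.
move=> hP [N hN] a b.
rewrite [RHS]ip_conj.
refine (cvgC_uniq _ _ _ _ _ (hP a b) (cvgC_conj _ _ _ (hP b a)) _).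
exists N => m hm.
by rewrite hN // ip_conj.
Qed.

Arguments Sinf_invol [s].
Arguments K_selfadj [R H HS K] hK [s].
Arguments K_sub [R H HS K] hK [s].
Arguments weak_selfadj [R H HS T P].
Arguments ip_ext [R H] HS [u v].

Theorem lemma5 (R : realType) (H : lmodType R[i]) (HS : hilbert_space H)
  (K : (nat -> nat) -> H -> H) (hK : unitary_rep HS K)
  (n k : nat) (hk : (1 <= k)%N) (P O : H -> H)
  (hP : weak_limit HS (fun m => K (nsigma n m)) P)
  (hO : weak_limit HS (fun N => K (transp k N)) O) :
  P \o O = O \o P.
Proof.
have Ssig m : Sinf (nsigma n m) := Sinf_invol (nsigma_invol n m) (nsigma0 n m).
have Str a N : (1 <= a)%N -> (1 <= N)%N -> Sinf (transp a N).
  by move=> ha hN; apply: Sinf_invol; [exact: transp_invol | exact: transp0].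
have Sadj m := K_selfadj hK (Ssig m) (nsigma_invol n m).
have Tadj N (hN : (1 <= N)%N) := K_selfadj hK (Str k N hk hN) (transp_invol k N).
have Pself : forall a b, ip HS (P a) b = ip HS a (P b).
  apply: (weak_selfadj hP); exists 0%N => m _; exact: Sadj.
have Oself : forall a b, ip HS (O a) b = ip HS a (O b).
  apply: (weak_selfadj hO); exists 1%N => m hm; exact: Tadj.
apply: functional_extensionality => x /=.
apply: (ip_ext HS) => y.
case: (leqP k n) => hkn.
- have step : forall m, ip HS (O x) (K (nsigma n m) y) = ip HS (O (K (nsigma n m) x)) y.
    move=> m; apply: (cvgC_uniq _ _ _ _ _ (hO x (K (nsigma n m) y)) (hO (K (nsigma n m) x) y)).
    exists (n + m + m).+1 => N hN.
    have hN1 : (1 <= N)%N by apply: leq_trans hN.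
    rewrite -Sadj -(rep_mul hK (Ssig m) (Str k N hk hN1)) -(rep_mul hK (Str k N hk hN1) (Ssig m)).
    have -> : nsigma n m \o transp k N = transp k N \o nsigma n m.
      apply: functional_extensionality => z /=; apply: comm_small => //.
      by rewrite hk hkn.
    by [].
  rewrite Oself.
  apply: (cvgC_uniq _ _ _ _ _ (hP (O x) y) (hP x (O y))).
  exists 0%N => m _.
  by rewrite Sadj step Oself.
- have key : forall N, (n < N)%N -> forall z y', ip HS (K (transp k N) (P z)) y' = ip HS (P z) y'.
    move=> N hnN z y'.
    have hN1 : (1 <= N)%N by apply: leq_trans hnN.
    rewrite Tadj //.
    pose t2 m := transp (k + m) (N + m).
    have St2 m : Sinf (t2 m) by apply: Str; rewrite addn_gt0 ?hk ?hN1.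
    apply: (cvgC_uniq _ _ (fun m => ip HS (K (nsigma n m) (K (t2 m) z)) y') _ _
             (hP z (K (transp k N) y'))).
      apply: (cvgC_close _ _ _ _ (hP z y')) => e e0.
      have [d [d0 hd]] := small_ip _ _ HS y' _ e0.
      have sd0 : 0 < sqrtC d by rewrite sqrtC_gt0.
      have [n0 hn0] := rep_cont hK z sd0.
      exists n0 => m hm.
      rewrite -ipBl -(K_sub hK (Ssig m)) Sadj.
      apply: hd; first by rewrite (rep_isometry hK (Ssig m)).
      have := hn0 m hm (t2 m).
      have hin : in_S_n_inf m (t2 m).
        split; first exact: St2.
        move=> j hj; rewrite /t2; apply: (transp_fix _ _ m); lia.
      move/(_ hin); rewrite /hnorm.
      rewrite ltr_sqrtC // qualifE /= ?ip_ge0 //; exact: ltW.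
    exists (k + N)%N => m hm.
    rewrite -Tadj // -(rep_mul hK (Str k N hk hN1) (Ssig m)) -(rep_mul hK (Ssig m) (St2 m)).
    have -> : transp k N \o nsigma n m = nsigma n m \o t2 m.
      apply: functional_extensionality => w /=; apply: comm_big; lia.
    by [].
  have OP : forall z, O (P z) = P z.
    move=> z; apply: (ip_ext HS) => y'.
    apply: (cvgC_uniq _ _ _ _ _ (hO (P z) y') (cvgC_ev_const _ (fun _ => ip HS (P z) y') _ _)).
      by exists 0%N.
    exists n.+1 => N hN; exact: key.
  by rewrite Pself Oself OP -Pself OP.
Qed.
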